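(* Let $C$ be a field, let $W$ be a $C$-vector space of finite dimension $r=\dim W$, and let $n\geq 1$ and $\ell\leq r$ be positive integers. Suppose that for each $i=1,\dots,n$ we are given subspaces $W_{i,1},\dots,W_{i,\ell}$ of $W$ such that $W=W_{i,1}\oplus W_{i,2}\oplus\cdots\oplus W_{i,\ell}$ (direct sum). For a tuple $\mathbf j=(j_1,\dots,j_n)\in\{1,\dots,\ell\}^n$ put $W_{\mathbf j}:=W_{1,j_1}\cap W_{2,j_2}\cap\cdots\cap W_{n,j_n}$. Then there are at most $r$ distinct tuples $\mathbf j\in\{1,\dots,\ell\}^n$ such that $W_{\mathbf j}\neq\{0\}$.
   Context: In the paper $C$ is an algebraically closed subfield of $\mathbb C$; the lemma is a statement of linear algebra over $C$. *)

(* Defs.v *)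
From mathcomp Require Import all_boot all_order all_algebra.
Set Implicit Arguments.
Unset Strict Implicit.
Unset Printing Implicit Defensive.
Import GRing.Theory.
Local Open Scope ring_scope.

Definition Wtuple (C : fieldType) (W : vectType C) (n l : nat)
  (Ws : 'I_n -> 'I_l -> {vspace W}) (j : {ffun 'I_n -> 'I_l}) : {vspace W} :=
  (\bigcap_(i < n) Ws i (j i))%VS.

(* Main.v *)
Require Import Defs.
From mathcomp Require Import all_boot all_order all_algebra.
Set Implicit Arguments.
Unset Strict Implicit.
Import GRing.Theory.
Local Open Scope ring_scope.

Definition agree n l (m : nat) (j j0 : {ffun 'I_n -> 'I_l}) :=
  [forall i : 'I_n, (i < m)%N ==> (j i == j0 i)].

Lemma key (C : fieldType) (W : vectType C) (n l : nat)
  (Ws : 'I_n -> 'I_l -> {vspace W}) :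
  (forall i : 'I_n, directv (\sum_(k < l) Ws i k)) ->
  forall (P : pred {ffun 'I_n -> 'I_l}) us,
  (forall j, P j -> us j \in Wtuple Ws j) -> \sum_(j | P j) us j = 0 ->
  forall m, (m <= n)%N -> forall j0,
  \sum_(j | P j && agree m j j0) us j = 0.
Proof.
move=> dx P us Uu s0; elim=> [|m IH] lemn j0.
  rewrite -[RHS]s0; apply: eq_bigl => j; rewrite /agree; case: (P j) => //=;
  by apply/forallP.
have ltmn : (m < n)%N by [].
pose i0 := Ordinal ltmn.
have IH0 := IH (ltnW lemn) j0.
rewrite (partition_big (fun j : {ffun 'I_n -> 'I_l} => j i0) xpredT) // in IH0.
have mem : forall k : 'I_l, xpredT k ->
  \sum_(j | (P j && agree m j j0) && (j i0 == k)) us j \in Ws i0 k.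
  move=> k _; apply: rpred_sum => j /andP[/andP[Pj _] /eqP <-].
  have : (Wtuple Ws j <= Ws i0 (j i0))%VS.
    exact: (bigcapv_inf (P := xpredT) (Us := fun i => Ws i (j i)) i0 isT (subvv _)).
  by move/subvP; apply; apply: Uu.
have H := directv_sum_independent (dx i0) _ mem IH0 (j0 i0) isT.
rewrite -[RHS]H.
apply: eq_bigl => j; rewrite -andbA; congr (_ && _).
rewrite /agree; apply/idP/idP.
  move=> /forallP A; apply/andP; split.
    apply/forallP => i; apply/implyP => him; have := A i.
    by rewrite (ltn_trans him (ltnSn _)).
  by have := A i0; rewrite /= ltnSn.
move=> /andP[/forallP A /eqP B]; apply/forallP => i; apply/implyP => him.
rewrite ltnS leq_eqVlt in him; case/orP: him => [/eqP him|him].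
  have -> : i = i0 by apply: val_inj.
  by rewrite B.
by have := A i; rewrite him.
Qed.

Theorem lemma1 (C : fieldType) (W : vectType C) (n l : nat)
  (Ws : 'I_n -> 'I_l -> {vspace W}) :
  (1 <= n)%N -> (1 <= l)%N -> (l <= \dim (fullv : {vspace W}))%N ->
  (forall i : 'I_n,
     (\sum_(k < l) Ws i k)%VS = fullv /\ directv (\sum_(k < l) Ws i k)) ->
  (#|[set j : {ffun 'I_n -> 'I_l} | Wtuple Ws j != 0%VS]|
     <= \dim (fullv : {vspace W}))%N.
Proof.
move=> _ _ _ hW.
have dx : forall i : 'I_n, directv (\sum_(k < l) Ws i k) by move=> i; case: (hW i).
set S := [set j : {ffun 'I_n -> 'I_l} | Wtuple Ws j != 0%VS].
have dS : directv (\sum_(j in S) Wtuple Ws j).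
  apply/directv_sum_independent => us Uu s0 j0 Sj0.
  have := key dx Uu s0 (leqnn n) j0.
  rewrite (big_pred1 j0) // => j /=.
  apply/idP/idP.
    move=> /andP[_ /forallP A]; apply/eqP/ffunP => i.
    by have := A i; rewrite ltn_ord => /eqP.
  by move=> /eqP ->; rewrite Sj0 /agree; apply/forallP => i; rewrite eqxx implybT.
move/directvP: dS => /= dS.
apply: (leq_trans _ (dimvS (subvf (\sum_(j in S) Wtuple Ws j)%VS))).
rewrite dS -sum1_card; apply: leq_sum => j.
by rewrite inE lt0n dimv_eq0.
Qed.
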